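(* Let $w\in\{a,b\}^*$ (with $a\ne b$) satisfy $|w|>7$ and $l(w)=5$. Then every element of $\mathtt{BR}(w)$ is rich if and only if $w$ or its complement $w^c$ is of one of the forms $a^{n_1}ba^{n_3}ba^{n_5}$ (with $n_1,n_3,n_5\ge1$), or $ab^{n_2}ab^{n_4}a^2$, $a^2b^{n_2}ab^{n_4}a$, $ab^{n_2}a^2b^{n_4}a$ with $n_2,n_4\ge1$ and $n_2+n_4=4$.
   Context: For a word $w=w_1\cdots w_n$, $|w|=n$, $w^R=w_n\cdots w_1$; $w$ is a palindrome if $w=w^R$; a factor of $w$ is a word $u$ with $w=puq$. A word $w$ is rich if the number of distinct nonempty palindromic factors of $w$ equals $|w|$. The block reversal of a nonempty word $w$ is $\mathtt{BR}(w)=\{B_t\cdots B_1 : w=B_1\cdots B_t,\ t\ge1,\ \text{each } B_i \text{ nonempty}\}$. Every nonempty word has a unique run-length encoding $w=c_1^{n_1}\cdots c_k^{n_k}$ with letters $c_i\neq c_{i+1}$, $n_i\ge1$; $l(w)=k$. The complement $w^c$ of $w\in\{a,b\}^*$ is obtained by exchanging $a$ and $b$. *)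

(* Defs.v *)
From mathcomp Require Import all_boot.
Set Implicit Arguments. Unset Strict Implicit. Unset Printing Implicit Defensive.

Definition la : bool := false.
Definition lb : bool := true.

Definition word := seq bool.

Definition palindrome (w : word) : bool := w == rev w.

Definition factors (w : word) : seq word :=
  [seq take j (drop i w) | i <- iota 0 (size w).+1, j <- iota 0 (size w).+1].

Definition pal_factors (w : word) : seq word :=
  undup [seq u <- factors w | (u != [::]) && palindrome u].

Definition rich (w : word) : Prop := size (pal_factors w) = size w.

Definition inBR (w v : word) : Prop :=
  exists Bs : seq word,
    [/\ 1 <= size Bs, all (fun B => B != [::]) Bs, flatten Bs = w
      & v = flatten (rev Bs)].

Fixpoint rle (w : word) : seq (bool * nat) :=
  match w with
  | [::] => [::]
  | x :: s =>
      match rle s with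
      | [::] => [:: (x, 1)]
      | (y, n) :: r => if x == y then (y, n.+1) :: r else (x, 1) :: (y, n) :: r
      end
  end.

Definition l (w : word) : nat := size (rle w).

Definition compl (w : word) : word := map negb w.

Definition good_form (w : word) : Prop :=
  (exists n1 n3 n5, [/\ 1 <= n1, 1 <= n3, 1 <= n5 &
      w = nseq n1 la ++ [:: lb] ++ nseq n3 la ++ [:: lb] ++ nseq n5 la])
  \/ (exists n2 n4, [/\ 1 <= n2, 1 <= n4, n2 + n4 = 4 &
      [\/ w = [:: la] ++ nseq n2 lb ++ [:: la] ++ nseq n4 lb ++ [:: la; la],
          w = [:: la; la] ++ nseq n2 lb ++ [:: la] ++ nseq n4 lb ++ [:: la]
        | w = [:: la] ++ nseq n2 lb ++ [:: la; la] ++ nseq n4 lb ++ [:: la]]]).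

Example rle_ex : rle [:: la; la; lb; la] = [:: (la,2); (lb,1); (la,1)]. Proof. by []. Qed.
Example rich_ex : size (pal_factors [:: la; lb; la; la]) = 4. Proof. by []. Qed.

(* Main.v *)
Require Import Defs.
From mathcomp Require Import all_boot zify.
Set Implicit Arguments. Unset Strict Implicit. Unset Printing Implicit Defensive.

Lemma mem_factors (u w : word) : (u \in factors w) = infix u w.
Proof.
apply/idP/idP.
- case/allpairsPdep => i [j [_ _ ->]].
  have H1 : infix (take j (drop i w)) (drop i w) by exact: prefixW (prefix_take _ _).
  apply: infix_trans H1 _.
  by rewrite -{2}(cat_take_drop i w) suffix_infix.
- case/infixP => p [s ->]; apply/allpairsPdep.
  exists (size p), (size u); rewrite !mem_iota !size_cat /=.
  split; [lia | lia |].
  by rewrite drop_size_cat // take_size_cat.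
Qed.

Lemma mem_pal (u w : word) :
  (u \in pal_factors w) = [&& u != [::], palindrome u & infix u w].
Proof. by rewrite mem_undup mem_filter mem_factors andbA. Qed.

Lemma uniq_pal w : uniq (pal_factors w).
Proof. exact: undup_uniq. Qed.

Definition cnt w := size (pal_factors w).

Lemma cnt_eq w1 w2 : pal_factors w1 =i pal_factors w2 -> cnt w1 = cnt w2.
Proof. by move=> H; apply: perm_size; apply: uniq_perm => //; apply: uniq_pal. Qed.

Lemma cnt_le w1 w2 : {subset pal_factors w1 <= pal_factors w2} -> cnt w1 <= cnt w2.
Proof. by move=> H; apply: uniq_leq_size => //; apply: uniq_pal. Qed.

Lemma palindrome_rev u : palindrome (rev u) = palindrome u.
Proof. by rewrite /palindrome revK eq_sym. Qed.

Lemma palE u : palindrome u -> rev u = u.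
Proof. by move/eqP. Qed.

Lemma cnt_rev w : cnt (rev w) = cnt w.
Proof.
apply: cnt_eq => u; rewrite !mem_pal.
case: (boolP (palindrome u)) => Hp; rewrite ?andbF //=.
by rewrite -infix_rev (palE Hp) revK.
Qed.

Lemma pal_suffix_prefix p q : palindrome p -> palindrome q -> suffix p q -> prefix p q.
Proof. by move=> Hp Hq; rewrite -prefix_rev (palE Hp) (palE Hq). Qed.

Lemma suffix_suffix_le (p q s : word) : suffix p s -> suffix q s -> size p <= size q -> suffix p q.
Proof.
move=> P1 P2 Hs.
have Hps : size p <= size s by case/suffixP: P1 => s' ->; rewrite size_cat; lia.
have Hqs : size q <= size s by case/suffixP: P2 => s' ->; rewrite size_cat; lia.
move: P1 P2; rewrite -!prefix_rev !prefixE !size_rev => /eqP <- /eqP <-.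
by rewrite take_takel.
Qed.

Lemma two_suffixes u z p q : palindrome p -> palindrome q ->
  suffix p (rcons u z) -> suffix q (rcons u z) -> size p < size q -> infix p u.
Proof.
move=> Hp Hq Sp Sq Hs.
have /prefixP [t Et] := pal_suffix_prefix Hp Hq (suffix_suffix_le Sp Sq (ltnW Hs)).
case/suffixP: Sq => s1 E1.
case/lastP: t Et => [|t' z'] Et.
  by move: Hs; rewrite Et cats0 ltnn.
move: E1; rewrite Et -rcons_cat -rcons_cat => /rcons_inj [-> _].
by rewrite infix_infix.
Qed.

Lemma pal_rcons_inv u z p : p \in pal_factors (rcons u z) -> ~~ infix p u ->
  [/\ p != [::], palindrome p & suffix p (rcons u z)].
Proof.
rewrite mem_pal infix_rconsl => /and3P [H1 H2 /orP [H3|H3]] H4; first by split.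
by rewrite H3 in H4.
Qed.

Lemma step0 u z :
  (forall p, p != [::] -> palindrome p -> suffix p (rcons u z) -> infix p u) ->
  cnt (rcons u z) <= cnt u.
Proof.
move=> H; apply: cnt_le => p; rewrite !mem_pal infix_rconsl => /and3P [H1 H2 /orP [H3|H3]].
  by rewrite H1 H2 (H p H1 H2 H3).
by rewrite H1 H2 H3.
Qed.

Lemma size_le1 (s : seq word) : uniq s -> (forall x y, x \in s -> y \in s -> x = y) -> size s <= 1.
Proof.
case: s => [|x [|y s]] //= /andP [Hx _] H.
by move: Hx; rewrite (H x y) ?inE ?eqxx ?orbT // inE eqxx.
Qed.

Lemma suffix_same_size (p q : word) : suffix p q -> size p = size q -> p = q.
Proof. by move=> S E; move: S; rewrite suffixE E subnn drop0 => /eqP. Qed.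

Lemma step1 u z : cnt (rcons u z) <= (cnt u).+1.
Proof.
rewrite /cnt -(count_predC (fun p => infix p u)).
have A : count (fun p => infix p u) (pal_factors (rcons u z)) <= size (pal_factors u).
  rewrite -size_filter; apply: uniq_leq_size; first by rewrite filter_uniq // uniq_pal.
  move=> p; rewrite mem_filter !mem_pal infix_rconsl => /andP [H1 /and3P [-> -> _]].
  by rewrite H1.
have B : count (predC (fun p => infix p u)) (pal_factors (rcons u z)) <= 1.
  rewrite -size_filter; apply: size_le1; first by rewrite filter_uniq // uniq_pal.
  move=> p q; rewrite !mem_filter /= => /andP [Hp1 Hp2] /andP [Hq1 Hq2].
  case: (pal_rcons_inv Hp2 Hp1) => _ Pp Sp.
  case: (pal_rcons_inv Hq2 Hq1) => _ Pq Sq.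
  have [Hs|Hs] := ltnP (size p) (size q).
    by rewrite (two_suffixes Pp Pq Sp Sq Hs) in Hp1.
  have [Hs2|Hs2] := ltnP (size q) (size p).
    by rewrite (two_suffixes Pq Pp Sq Sp Hs2) in Hq1.
  apply: suffix_same_size; last by apply/eqP; rewrite eqn_leq Hs Hs2.
  by apply: suffix_suffix_le Sp Sq _.
lia.
Qed.

Lemma cnt_cat_le u v : cnt (u ++ v) <= cnt u + size v.
Proof.
elim/last_ind: v => [|v z IH]; first by rewrite cats0 addn0.
rewrite -rcons_cat size_rcons; apply: leq_trans (step1 _ _) _; lia.
Qed.

Lemma cnt_size w : cnt w <= size w.
Proof. by have := cnt_cat_le [::] w. Qed.

Lemma cnt_cat_le2 u v : cnt (u ++ v) <= size u + cnt v.
Proof.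
rewrite -cnt_rev rev_cat -(cnt_rev v) -(size_rev u) addnC; exact: cnt_cat_le.
Qed.

Lemma cnt_infix_lt r v : infix r v -> cnt r < size r -> cnt v < size v.
Proof.
case/infixP => P [S ->] H.
have := cnt_cat_le2 P (r ++ S); have := cnt_cat_le r S.
rewrite !size_cat => A B; apply: leq_ltn_trans B _; rewrite ltn_add2l; apply: leq_ltn_trans A _; by rewrite ltn_add2r.
Qed.

Lemma not_rich_infix r v : infix r v -> cnt r < size r -> ~ rich v.
Proof. by move=> H1 H2; rewrite /rich -/(cnt v) => E; have := cnt_infix_lt H1 H2; rewrite E ltnn. Qed.

Definition win (x : bool) c1 p k q c5 : word :=
  nseq c1 x ++ nseq p (~~ x) ++ nseq k x ++ nseq q (~~ x) ++ nseq c5 x.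

Lemma nth_win x c p k q j :
  nth x (win x c p k q c) j =
  if (c <= j < c + p) || (c + p + k <= j < c + p + k + q) then ~~ x else x.
Proof.
rewrite /win !nth_cat !size_nseq !nth_nseq.
by repeat (case: ifP => ?); lia.
Qed.

Lemma ifx (x A B : bool) : (if A then ~~ x else x) = (if B then ~~ x else x) -> A = B.
Proof. by case: A; case: B; case: x. Qed.

Lemma nth_pal (s : word) x i : palindrome s -> i < size s ->
  nth x s i = nth x s (size s - i.+1).
Proof. move=> /eqP E Hi; have {1}-> : s = rev s by []. by rewrite nth_rev. Qed.

Lemma core_win x k p q : 1 <= k -> 1 <= p -> 1 <= q -> p != q ->
  cnt (win x k.+1 p k q k.+1) < size (win x k.+1 p k q k.+1).
Proof.
move=> Hk Hp Hq Hpq.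
set c := k.+1.
set r := win x c p k q c.
set u := nseq c x ++ nseq p (~~ x) ++ nseq k x ++ nseq q (~~ x) ++ nseq k x.
have Er : r = rcons u x by rewrite /r /u /win /c /= -!cats1 -!catA -[x :: nil]/(nseq 1 x) -nseqD addn1.
have Hsu : size u = (size r).-1 by rewrite Er size_rcons.
have Hsr : size r = c + p + k + q + c by rewrite /r /win !size_cat !size_nseq; lia.
suff : cnt r <= cnt u.
  move=> H; apply: leq_ltn_trans H _; apply: leq_ltn_trans (cnt_size u) _; lia.
rewrite Er; apply: step0; rewrite -Er => s Hne Hps Hsuf.
have Hss : size s <= size r by case/suffixP: Hsuf => t E; rewrite E size_cat leq_addl.
set d := size r - size s.
have Es : s = drop d r by move: Hsuf; rewrite suffixE => /eqP.
have Hs0 : 0 < size s by case: (s) Hne.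
have HP : forall i, i < size s -> nth x r (d + i) = nth x r (size r - i.+1).
  move=> i Hi; rewrite -nth_drop -Es (nth_pal x Hps Hi) Es nth_drop size_drop.
  congr nth; rewrite /d; lia.
have HPb : forall i, i < size s ->
   ((c <= d + i < c + p) || (c + p + k <= d + i < c + p + k + q)) =
   ((c <= size r - i.+1 < c + p) || (c + p + k <= size r - i.+1 < c + p + k + q)).
  by move=> i Hi; apply: (@ifx x); rewrite -!nth_win; apply: HP.
case: (leqP (size s) c) => Hsc.
  have -> : s = nseq (size s) x.
    apply: (@eq_from_nth _ x); first by rewrite size_nseq.
    move=> i Hi; rewrite nth_nseq Hi Es nth_drop /r nth_win.
    by case: ifP => //; rewrite /d; lia.
  rewrite /u -(subnKC Hsc) nseqD -catA; exact: prefixW (prefix_prefix _ _).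
exfalso.
have Hcdef : c = k.+1 by [].
have Hddef : d = size r - size s by [].
have Ac : (c <= d + c < c + p) || (c + p + k <= d + c < c + p + k + q).
  by rewrite (HPb c Hsc); lia.
have A0 : ~~ ((c <= d + 0 < c + p) || (c + p + k <= d + 0 < c + p + k + q)).
  by rewrite (HPb 0 Hs0); lia.
case: (posnP d) => Hd.
  move: Hpq; rewrite neq_ltn => /orP [Hpq|Hpq].
    have := HPb (c + p); rewrite Hd; lia.
  have := HPb (c + q); rewrite Hd; lia.
case: (leqP d c) => Hdc.
  have := HPb (c - d); lia.
have := HPb (c + p + k - d); lia.
Qed.

Lemma nonrich_win x c1 p k q c5 (P S : word) :
  1 <= k -> k < c1 -> k < c5 -> 1 <= p -> 1 <= q -> p != q ->
  ~ rich (P ++ win x c1 p k q c5 ++ S).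
Proof.
move=> Hk H1 H5 Hp Hq Hpq.
apply: (@not_rich_infix (win x k.+1 p k q k.+1)); last exact: core_win.
apply/infixP; exists (P ++ nseq (c1 - k.+1) x), (nseq (c5 - k.+1) x ++ S).
have E1 : nseq c1 x = nseq (c1 - k.+1) x ++ nseq k.+1 x by rewrite -nseqD subnK.
have E5 : nseq c5 x = nseq k.+1 x ++ nseq (c5 - k.+1) x by rewrite -nseqD subnKC.
by rewrite /win E1 E5 -!catA.
Qed.

Lemma rich_cnt v : rich v <-> cnt v = size v.
Proof. by []. Qed.

Lemma rich_rev v : rich (rev v) <-> rich v.
Proof. by rewrite !rich_cnt cnt_rev size_rev. Qed.

Lemma infix_map_negb (u v : word) : infix u v -> infix (map negb u) (map negb v).
Proof. by case/infixP => p [s ->]; apply/infixP; exists (map negb p), (map negb s); rewrite !map_cat. Qed.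

Lemma compl_inv (u : word) : compl (compl u) = u.
Proof. by rewrite /compl -map_comp (@eq_map _ _ _ id) ?map_id // => b /=; rewrite negbK. Qed.

Lemma pal_compl (u : word) : palindrome (compl u) = palindrome u.
Proof. by rewrite /palindrome /compl -map_rev (inj_eq (inj_map negb_inj)). Qed.

Lemma cnt_compl v : cnt (compl v) = cnt v.
Proof.
rewrite /cnt -(size_map compl (pal_factors v)); apply: perm_size; apply: uniq_perm.
- exact: uniq_pal.
- by rewrite (map_inj_uniq (inj_map negb_inj)) uniq_pal.
move=> u; rewrite mem_pal.
apply/idP/mapP => [/and3P [H1 H2 H3] | [u' Hu' ->]].
  exists (compl u); last by rewrite compl_inv.
  rewrite mem_pal pal_compl H2 -(compl_inv v) /compl infix_map_negb // andbT.
  by case: (u) H1.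
move: Hu'; rewrite mem_pal pal_compl => /and3P [H1 H2 H3].
by rewrite H2 infix_map_negb // andbT; case: (u') H1.
Qed.

Lemma rich_compl v : rich (compl v) <-> rich v.
Proof. by rewrite !rich_cnt cnt_compl /compl size_map. Qed.

Lemma inBR_rev w v : inBR w v -> inBR (rev w) (rev v).
Proof.
case=> Bs [H1 H2 H3 H4]; exists (rev (map rev Bs)); split.
- by rewrite size_rev size_map.
- apply/allP => B; rewrite mem_rev => /mapP [B' HB' ->].
  by rewrite -size_eq0 size_rev size_eq0; move/allP: H2; apply.
- by rewrite -H3 rev_flatten.
- by rewrite H4 rev_flatten map_rev !revK.
Qed.

Lemma inBR_compl w v : inBR w v -> inBR (compl w) (compl v).
Proof.
case=> Bs [H1 H2 H3 H4]; exists (map compl Bs); split.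
- by rewrite size_map.
- rewrite all_map; apply/allP => B HB /=.
  by rewrite -size_eq0 /compl size_map size_eq0; move/allP: H2; apply.
- by rewrite -H3 /compl map_flatten.
- by rewrite H4 /compl map_flatten map_rev.
Qed.

Definition nonrichBR w := exists v, inBR w v /\ ~ rich v.

Lemma nonrichBR_rev w : nonrichBR (rev w) -> nonrichBR w.
Proof.
case=> v [H1 H2]; exists (rev v); split.
  by rewrite -(revK w); apply: inBR_rev.
by rewrite rich_rev.
Qed.

Lemma nonrichBR_compl w : nonrichBR (compl w) -> nonrichBR w.
Proof.
case=> v [H1 H2]; exists (compl v); split.
  by rewrite -(compl_inv w); apply: inBR_compl.
by rewrite rich_compl.
Qed.

Lemma inBR_count w v : inBR w v -> count_mem true v = count_mem true w.
Proof.
case=> Bs [_ _ <- ->]; rewrite !count_flatten map_rev sumn_rev //.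
Qed.

Fixpoint brs_aux n (w : word) : seq word :=
  match n with
  | 0 => [::]
  | n'.+1 =>
    if w is [::] then [::] else
    w :: flatten [seq [seq v ++ take i w | v <- brs_aux n' (drop i w)]
                 | i <- iota 1 (size w).-1]
  end.

Lemma inBR_brs_aux n w v : size w <= n -> inBR w v -> v \in brs_aux n w.
Proof.
elim: n w v => [|n IH] w v Hn [Bs [H1 H2 H3 H4]].
  case: Bs H1 H2 H3 H4 => // B Bs _ /= /andP [HB _] Hw.
  by move: Hn; rewrite -Hw size_cat leqn0 addn_eq0 size_eq0 (negbTE HB).
case: Bs H1 H2 H3 H4 => // B Bs _ /= /andP [HB HBs] Hw Hv.
have Hw0 : w != [::] by rewrite -Hw; case: (B) HB.
case: w Hw0 Hw Hn Hv IH => // x s _ Hw Hn Hv IH.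
rewrite inE; case: Bs HBs Hw Hv => [|B2 Bs] HBs Hw Hv.
  by rewrite Hv /= -Hw /= cats0 eqxx.
apply/orP; right; apply/flattenP.
have HBi : 0 < size B by rewrite lt0n size_eq0.
have HBsz : 0 < size (B2 ++ flatten Bs).
  by move: HBs => /= /andP [H _]; rewrite size_cat addn_gt0 lt0n size_eq0 H.
have Hs : size B + size (B2 ++ flatten Bs) = (size s).+1.
  by move: Hw => /(congr1 size); rewrite size_cat.
exists [seq v0 ++ take (size B) (x :: s) | v0 <- brs_aux n (drop (size B) (x :: s))].
  apply/mapP; exists (size B) => //; rewrite mem_iota /=; lia.
apply/mapP; exists (flatten (rev (B2 :: Bs))).
  apply: IH.
    rewrite -Hw drop_size_cat //; move: Hn; rewrite /=; lia.
  exists (B2 :: Bs); split => //.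
  by rewrite -Hw drop_size_cat.
by rewrite Hv -Hw take_size_cat // rev_cons flatten_rcons.
Qed.

Lemma inBR_brs w v : inBR w v -> v \in brs_aux (size w) w.
Proof. exact: inBR_brs_aux. Qed.

Definition W n1 n2 n3 n4 n5 : word :=
  nseq n1 false ++ nseq n2 true ++ nseq n3 false ++ nseq n4 true ++ nseq n5 false.

Lemma W_rev n1 n2 n3 n4 n5 : rev (W n1 n2 n3 n4 n5) = W n5 n4 n3 n2 n1.
Proof. by rewrite /W !rev_cat !rev_nseq -!catA. Qed.

Lemma mkBR (w : word) (Bs : seq word) x c1 p k q c5 (P S : word) :
  all (fun B => B != [::]) Bs -> 1 <= size Bs -> flatten Bs = w ->
  flatten (rev Bs) = P ++ win x c1 p k q c5 ++ S ->
  1 <= k -> k < c1 -> k < c5 -> 1 <= p -> 1 <= q -> p != q -> nonrichBR w.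
Proof.
move=> H1 H2 H3 H4 Hk H5 H6 H7 H8 H9.
exists (flatten (rev Bs)); split; first by exists Bs.
by rewrite H4; apply: nonrich_win.
Qed.

Ltac ne_tac := rewrite /= -?size_eq0 ?size_cat ?size_nseq; lia.
Ltac eq_tac := rewrite /W /win /= ?cats0 ?nseqD -?catA; reflexivity.

Lemma tT1 e1 s n2 n3 t e4 n5 : 1 <= n2 -> 1 <= n3 -> 1 <= t -> 1 <= n5 ->
  n3 < e1 -> n3 < n5 + s -> t != n2 -> nonrichBR (W (e1 + s) n2 n3 (t + e4) n5).
Proof.
move=> *.
apply: (@mkBR _ [:: nseq e1 false; nseq s false ++ nseq n2 true ++ nseq n3 false ++ nseq t true;
   nseq e4 true ++ nseq n5 false] false (n5 + s) n2 n3 t e1 (nseq e4 true) [::]) => //;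
  try ne_tac; try eq_tac; lia.
Qed.

Lemma tT5 n1 j e2 i e3 n4 n5 : 1 <= n1 -> 1 <= n4 -> 1 <= n5 -> 1 <= e2 ->
  n5 < e3 -> n5 < i + n1 -> e2 != n4 -> nonrichBR (W n1 (j + e2) (i + e3) n4 n5).
Proof.
move=> *.
apply: (@mkBR _ [:: nseq n1 false ++ nseq j true; nseq e2 true ++ nseq i false;
   nseq e3 false ++ nseq n4 true ++ nseq n5 false] false e3 n4 n5 e2 (i + n1) [::] (nseq j true)) => //;
  try ne_tac; try eq_tac; lia.
Qed.

Lemma tT7a e1 e2 n3 n4 n5 : 1 < n3 -> 1 < e1 -> n4 != 1 -> 1 <= n4 -> 1 <= n5 ->
  nonrichBR (W (e1 + 1) (1 + e2) n3 n4 n5).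
Proof.
move=> *.
apply: (@mkBR _ [:: nseq e1 false; [:: false; true]; nseq e2 true ++ nseq n3 false ++ nseq n4 true;
   nseq n5 false] false n3 n4 1 1 e1 (nseq n5 false ++ nseq e2 true) [::]) => //;
  try ne_tac; try eq_tac; lia.
Qed.

Lemma tT7b e1 n2 n3 n4 n5 : 1 < n5 + n3 -> 1 < e1 -> n4 != n2 -> 1 <= n2 -> 1 <= n4 -> 1 <= n3 -> 1 <= n5 ->
  nonrichBR (W (e1 + 1) n2 n3 n4 n5).
Proof.
move=> *.
apply: (@mkBR _ [:: nseq e1 false; false :: nseq n2 true; nseq n3 false ++ nseq n4 true;
   nseq n5 false] false (n5 + n3) n4 1 n2 e1 [::] [::]) => //;
  try ne_tac; try eq_tac; lia.
Qed.

Lemma tU1 n1 n2 n3 j e4 n5 : 1 <= n2 -> n2 < e4 -> n2 < j -> 1 <= n5 -> 1 <= n3 -> n5 + n1 != n3 ->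
  nonrichBR (W n1 n2 n3 (j + e4) n5).
Proof.
move=> *.
apply: (@mkBR _ [:: nseq n1 false ++ nseq n2 true ++ nseq n3 false ++ nseq j true;
   nseq e4 true ++ nseq n5 false] true e4 (n5 + n1) n2 n3 j [::] [::]) => //;
  try ne_tac; try eq_tac; lia.
Qed.

Lemma tU3 n1 n2 n3 e4 n5 : 1 < e4 -> 1 < n2 -> 1 <= n1 -> 1 <= n3 -> 1 <= n5 -> n5 + n3 != n1 ->
  nonrichBR (W n1 n2 n3 (1 + e4) n5).
Proof.
move=> *.
apply: (@mkBR _ [:: nseq n1 false ++ nseq n2 true; nseq n3 false ++ [:: true];
   nseq e4 true ++ nseq n5 false] true e4 (n5 + n3) 1 n1 n2 [::] [::]) => //;
  try ne_tac; try eq_tac; lia.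
Qed.

Lemma tV1 n1 n2 n3 y e4 n5 : 1 <= n1 -> 1 <= n2 -> n2 < e4 -> n2 < y -> 1 <= n5 -> 1 <= n3 -> n5 != n3 ->
  nonrichBR (W n1 n2 n3 (y + e4) n5).
Proof.
move=> *.
apply: (@mkBR _ [:: nseq n1 false; nseq n2 true ++ nseq n3 false ++ nseq y true;
   nseq e4 true ++ nseq n5 false] true e4 n5 n2 n3 y [::] (nseq n1 false)) => //;
  try ne_tac; try eq_tac; lia.
Qed.

Lemma mirror n1 n2 n3 n4 n5 : nonrichBR (W n5 n4 n3 n2 n1) -> nonrichBR (W n1 n2 n3 n4 n5).
Proof. by move=> H; apply: nonrichBR_rev; rewrite W_rev. Qed.

Lemma st1 n1 n2 n3 n4 n5 : 1 <= n2 -> 1 <= n3 -> 1 <= n4 -> 1 <= n5 -> 3 <= n1 ->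
  ~~ ((n2 == 1) && (n4 == 1)) -> nonrichBR (W n1 n2 n3 n4 n5).
Proof.
move=> H2 H3 H4 H5 H1 Hnb.
have [E|NE] := eqVneq n4 n2; last first.
  have -> : n1 = (n1 - 1) + 1 by lia.
  apply: tT7b => //; lia.
case: (leqP 2 n3) => H3'.
  have -> : n1 = (n1 - 1) + 1 by lia.
  have -> : n2 = 1 + (n2 - 1) by lia.
  apply: tT7a => //; lia.
have -> : n1 = 2 + (n1 - 2) by lia.
have -> : n4 = 1 + (n4 - 1) by lia.
apply: tT1 => //; lia.
Qed.

Lemma st3 n1 n2 n3 n4 n5 : 1 <= n1 -> 1 <= n2 -> 1 <= n3 -> 1 <= n5 -> 6 <= n4 ->
  nonrichBR (W n1 n2 n3 n4 n5).
Proof.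
move=> H1 H2 H3 H5 H4.
case: (leqP 2 n2) => H2'.
  have [E|NE] := eqVneq n1 (n3 + n5); last first.
    have -> : n4 = 1 + (n4 - 1) by lia.
    apply: tU3 => //; lia.
  case: (leqP 3 n2) => H2''.
    apply: mirror.
    have -> : n2 = 1 + (n2 - 1) by lia.
    apply: tU3 => //; lia.
  have -> : n4 = (n2 + 1) + (n4 - n2 - 1) by lia.
  apply: tU1 => //; lia.
have [E|NE] := eqVneq (n5 + n1) n3; last first.
  have -> : n4 = (n2 + 1) + (n4 - n2 - 1) by lia.
  apply: tU1 => //; lia.
have -> : n4 = (n2 + 1) + (n4 - n2 - 1) by lia.
apply: tV1 => //; lia.
Qed.

Lemma stT5 n1 n2 n3 n4 n5 : 1 <= n1 -> 1 <= n2 -> 1 <= n3 -> 1 <= n4 -> 1 <= n5 ->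
  n5 < n3 -> 2 * n5 + 2 <= n1 + n3 ->
  ~~ ((n2 == 1) && (n4 == 1)) -> nonrichBR (W n1 n2 n3 n4 n5).
Proof.
move=> H1 H2 H3 H4 H5 H6 H7 Hnb.
have -> : n3 = (n3 - n5 - 1) + (n5 + 1) by lia.
have [E|NE] := eqVneq n2 n4.
  have -> : n2 = 1 + (n2 - 1) by lia.
  apply: tT5 => //; lia.
have -> : n2 = 0 + n2 by [].
apply: tT5 => //; lia.
Qed.

Lemma st5 n1 n2 n3 n4 n5 : 1 <= n1 -> 1 <= n2 -> 1 <= n3 -> 1 <= n4 -> 1 <= n5 ->
  n1 <= 2 -> n5 <= 2 -> 4 <= n3 ->
  ~~ ((n2 == 1) && (n4 == 1)) -> nonrichBR (W n1 n2 n3 n4 n5).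
Proof.
move=> H1 H2 H3 H4 H5 H1' H5' H3' Hnb.
case: (leqP (2 * n5 + 2) (n1 + n3)) => H.
  apply: stT5 => //; lia.
apply: mirror; apply: stT5 => //; try lia.
Qed.
Definition table : seq (seq nat * seq (seq (bool * nat))) := [::
  ([:: 1;1;1;4;1], [:: [:: (false, 1); (true, 1); (false, 1); (true, 2)]; [:: (true, 2); (false, 1)]]);
  ([:: 1;1;1;4;2], [:: [:: (false, 1); (true, 1); (false, 1); (true, 2)]; [:: (true, 2); (false, 2)]]);
  ([:: 1;1;1;5;1], [:: [:: (false, 1); (true, 1); (false, 1); (true, 2)]; [:: (true, 3); (false, 1)]]);
  ([:: 1;1;1;5;2], [:: [:: (false, 1); (true, 1); (false, 1); (true, 2)]; [:: (true, 3); (false, 2)]]);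
  ([:: 1;1;2;2;2], [:: [:: (false, 1); (true, 1); (false, 2)]; [:: (true, 2)]; [:: (false, 2)]]);
  ([:: 1;1;2;3;2], [:: [:: (false, 1); (true, 1); (false, 2)]; [:: (true, 2)]; [:: (true, 1); (false, 2)]]);
  ([:: 1;1;2;4;1], [:: [:: (false, 1)]; [:: (true, 1); (false, 2); (true, 2)]; [:: (true, 2); (false, 1)]]);
  ([:: 1;1;2;4;2], [:: [:: (false, 1); (true, 1); (false, 2); (true, 2)]; [:: (true, 2); (false, 2)]]);
  ([:: 1;1;2;5;1], [:: [:: (false, 1)]; [:: (true, 1); (false, 2); (true, 2)]; [:: (true, 3); (false, 1)]]);
  ([:: 1;1;2;5;2], [:: [:: (false, 1); (true, 1); (false, 2); (true, 2)]; [:: (true, 3); (false, 2)]]);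
  ([:: 1;1;3;2;1], [:: [:: (false, 1)]; [:: (true, 1); (false, 1)]; [:: (false, 2); (true, 2); (false, 1)]]);
  ([:: 1;1;3;2;2], [:: [:: (false, 1); (true, 1); (false, 2)]; [:: (false, 1); (true, 2)]; [:: (false, 2)]]);
  ([:: 1;1;3;3;1], [:: [:: (false, 1)]; [:: (true, 1); (false, 1)]; [:: (false, 2); (true, 3); (false, 1)]]);
  ([:: 1;1;3;3;2], [:: [:: (false, 1); (true, 1); (false, 2)]; [:: (false, 1); (true, 2)]; [:: (true, 1); (false, 2)]]);
  ([:: 1;1;3;4;1], [:: [:: (false, 1); (true, 1); (false, 3); (true, 2)]; [:: (true, 2); (false, 1)]]);
  ([:: 1;1;3;4;2], [:: [:: (false, 1)]; [:: (true, 1); (false, 3); (true, 2)]; [:: (true, 2); (false, 2)]]);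
  ([:: 1;1;3;5;1], [:: [:: (false, 1); (true, 1); (false, 3); (true, 2)]; [:: (true, 3); (false, 1)]]);
  ([:: 1;1;3;5;2], [:: [:: (false, 1)]; [:: (true, 1); (false, 3); (true, 2)]; [:: (true, 3); (false, 2)]]);
  ([:: 1;2;1;3;1], [:: [:: (false, 1); (true, 2)]; [:: (false, 1); (true, 1)]; [:: (true, 2); (false, 1)]]);
  ([:: 1;2;1;3;2], [:: [:: (false, 1); (true, 2)]; [:: (false, 1); (true, 1)]; [:: (true, 2); (false, 2)]]);
  ([:: 1;2;1;4;1], [:: [:: (false, 1); (true, 2)]; [:: (false, 1); (true, 1)]; [:: (true, 3); (false, 1)]]);
  ([:: 1;2;1;4;2], [:: [:: (false, 1); (true, 2)]; [:: (false, 1); (true, 1)]; [:: (true, 3); (false, 2)]]);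
  ([:: 1;2;1;5;1], [:: [:: (false, 1); (true, 2)]; [:: (false, 1); (true, 1)]; [:: (true, 4); (false, 1)]]);
  ([:: 1;2;1;5;2], [:: [:: (false, 1); (true, 2)]; [:: (false, 1); (true, 1)]; [:: (true, 4); (false, 2)]]);
  ([:: 1;2;2;1;2], [:: [:: (false, 1); (true, 2); (false, 2)]; [:: (true, 1)]; [:: (false, 2)]]);
  ([:: 1;2;2;2;2], [:: [:: (false, 1); (true, 2); (false, 2)]; [:: (true, 1)]; [:: (true, 1); (false, 2)]]);
  ([:: 1;2;2;3;1], [:: [:: (false, 1); (true, 2)]; [:: (false, 2); (true, 1)]; [:: (true, 2); (false, 1)]]);
  ([:: 1;2;2;3;2], [:: [:: (false, 1); (true, 2)]; [:: (false, 2); (true, 1)]; [:: (true, 2); (false, 2)]]);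
  ([:: 1;2;2;4;1], [:: [:: (false, 1); (true, 2)]; [:: (false, 2); (true, 1)]; [:: (true, 3); (false, 1)]]);
  ([:: 1;2;2;4;2], [:: [:: (false, 1); (true, 2)]; [:: (false, 2); (true, 1)]; [:: (true, 3); (false, 2)]]);
  ([:: 1;2;2;5;1], [:: [:: (false, 1); (true, 2)]; [:: (false, 2); (true, 1)]; [:: (true, 4); (false, 1)]]);
  ([:: 1;2;2;5;2], [:: [:: (false, 1); (true, 2)]; [:: (false, 2); (true, 1)]; [:: (true, 4); (false, 2)]]);
  ([:: 1;2;3;1;1], [:: [:: (false, 1)]; [:: (true, 2); (false, 1)]; [:: (false, 2); (true, 1); (false, 1)]]);
  ([:: 1;2;3;1;2], [:: [:: (false, 1); (true, 2); (false, 2)]; [:: (false, 1); (true, 1)]; [:: (false, 2)]]);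
  ([:: 1;2;3;2;1], [:: [:: (false, 1); (true, 1)]; [:: (true, 1); (false, 1)]; [:: (false, 2); (true, 2); (false, 1)]]);
  ([:: 1;2;3;2;2], [:: [:: (false, 1); (true, 2); (false, 2)]; [:: (false, 1); (true, 1)]; [:: (true, 1); (false, 2)]]);
  ([:: 1;2;3;3;1], [:: [:: (false, 1)]; [:: (true, 2); (false, 1)]; [:: (false, 2); (true, 3); (false, 1)]]);
  ([:: 1;2;3;3;2], [:: [:: (false, 1); (true, 2)]; [:: (false, 3); (true, 1)]; [:: (true, 2); (false, 2)]]);
  ([:: 1;2;3;4;1], [:: [:: (false, 1)]; [:: (true, 2); (false, 1)]; [:: (false, 2); (true, 4); (false, 1)]]);
  ([:: 1;2;3;4;2], [:: [:: (false, 1); (true, 2)]; [:: (false, 3); (true, 1)]; [:: (true, 3); (false, 2)]]);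
  ([:: 1;2;3;5;1], [:: [:: (false, 1)]; [:: (true, 2); (false, 1)]; [:: (false, 2); (true, 5); (false, 1)]]);
  ([:: 1;2;3;5;2], [:: [:: (false, 1); (true, 2)]; [:: (false, 3); (true, 1)]; [:: (true, 4); (false, 2)]]);
  ([:: 1;3;1;2;1], [:: [:: (false, 1); (true, 2)]; [:: (true, 1); (false, 1)]; [:: (true, 2); (false, 1)]]);
  ([:: 1;3;1;2;2], [:: [:: (false, 1); (true, 1)]; [:: (true, 1)]; [:: (true, 1); (false, 1); (true, 2); (false, 2)]]);
  ([:: 1;3;1;3;1], [:: [:: (false, 1); (true, 2)]; [:: (true, 1); (false, 1)]; [:: (true, 3); (false, 1)]]);
  ([:: 1;3;1;3;2], [:: [:: (false, 1); (true, 1)]; [:: (true, 1)]; [:: (true, 1); (false, 1); (true, 3); (false, 2)]]);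
  ([:: 1;3;1;4;1], [:: [:: (false, 1); (true, 2)]; [:: (true, 1); (false, 1)]; [:: (true, 4); (false, 1)]]);
  ([:: 1;3;1;4;2], [:: [:: (false, 1); (true, 1)]; [:: (true, 1)]; [:: (true, 1); (false, 1); (true, 4); (false, 2)]]);
  ([:: 1;3;1;5;1], [:: [:: (false, 1); (true, 2)]; [:: (true, 1); (false, 1)]; [:: (true, 5); (false, 1)]]);
  ([:: 1;3;1;5;2], [:: [:: (false, 1); (true, 1)]; [:: (true, 1)]; [:: (true, 1); (false, 1); (true, 5); (false, 2)]]);
  ([:: 1;3;2;1;2], [:: [:: (false, 1); (true, 3); (false, 2)]; [:: (true, 1)]; [:: (false, 2)]]);
  ([:: 1;3;2;2;1], [:: [:: (false, 1); (true, 2)]; [:: (true, 1); (false, 1)]; [:: (false, 1); (true, 2); (false, 1)]]);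
  ([:: 1;3;2;2;2], [:: [:: (false, 1); (true, 2)]; [:: (true, 1)]; [:: (false, 2); (true, 2); (false, 2)]]);
  ([:: 1;3;2;3;1], [:: [:: (false, 1); (true, 2)]; [:: (true, 1); (false, 1)]; [:: (false, 1); (true, 3); (false, 1)]]);
  ([:: 1;3;2;3;2], [:: [:: (false, 1); (true, 2)]; [:: (true, 1)]; [:: (false, 2); (true, 3); (false, 2)]]);
  ([:: 1;3;2;4;1], [:: [:: (false, 1); (true, 2)]; [:: (true, 1); (false, 1)]; [:: (false, 1); (true, 4); (false, 1)]]);
  ([:: 1;3;2;4;2], [:: [:: (false, 1); (true, 2)]; [:: (true, 1)]; [:: (false, 2); (true, 4); (false, 2)]]);
  ([:: 1;3;2;5;1], [:: [:: (false, 1); (true, 2)]; [:: (true, 1); (false, 1)]; [:: (false, 1); (true, 5); (false, 1)]]);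
  ([:: 1;3;2;5;2], [:: [:: (false, 1); (true, 2)]; [:: (true, 1)]; [:: (false, 2); (true, 5); (false, 2)]]);
  ([:: 1;3;3;1;1], [:: [:: (false, 1)]; [:: (true, 3); (false, 1)]; [:: (false, 2); (true, 1); (false, 1)]]);
  ([:: 1;3;3;1;2], [:: [:: (false, 1); (true, 3); (false, 2)]; [:: (false, 1); (true, 1)]; [:: (false, 2)]]);
  ([:: 1;3;3;2;1], [:: [:: (false, 1)]; [:: (true, 3); (false, 1)]; [:: (false, 2); (true, 2); (false, 1)]]);
  ([:: 1;3;3;2;2], [:: [:: (false, 1); (true, 2)]; [:: (true, 1)]; [:: (false, 3); (true, 2); (false, 2)]]);
  ([:: 1;3;3;3;1], [:: [:: (false, 1); (true, 1)]; [:: (true, 2); (false, 1)]; [:: (false, 2); (true, 3); (false, 1)]]);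
  ([:: 1;3;3;3;2], [:: [:: (false, 1); (true, 2)]; [:: (true, 1)]; [:: (false, 3); (true, 3); (false, 2)]]);
  ([:: 1;3;3;4;1], [:: [:: (false, 1)]; [:: (true, 3); (false, 1)]; [:: (false, 2); (true, 4); (false, 1)]]);
  ([:: 1;3;3;4;2], [:: [:: (false, 1); (true, 2)]; [:: (true, 1)]; [:: (false, 3); (true, 4); (false, 2)]]);
  ([:: 1;3;3;5;1], [:: [:: (false, 1)]; [:: (true, 3); (false, 1)]; [:: (false, 2); (true, 5); (false, 1)]]);
  ([:: 1;3;3;5;2], [:: [:: (false, 1); (true, 2)]; [:: (true, 1)]; [:: (false, 3); (true, 5); (false, 2)]]);
  ([:: 1;4;1;1;1], [:: [:: (false, 1); (true, 2)]; [:: (true, 2); (false, 1); (true, 1); (false, 1)]]);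
  ([:: 1;4;1;1;2], [:: [:: (false, 1); (true, 2)]; [:: (true, 2); (false, 1); (true, 1); (false, 2)]]);
  ([:: 1;4;1;2;1], [:: [:: (false, 1); (true, 3)]; [:: (true, 1); (false, 1)]; [:: (true, 2); (false, 1)]]);
  ([:: 1;4;1;2;2], [:: [:: (false, 1); (true, 1)]; [:: (true, 1)]; [:: (true, 2); (false, 1); (true, 2); (false, 2)]]);
  ([:: 1;4;1;3;1], [:: [:: (false, 1); (true, 3)]; [:: (true, 1); (false, 1)]; [:: (true, 3); (false, 1)]]);
  ([:: 1;4;1;3;2], [:: [:: (false, 1); (true, 1)]; [:: (true, 1)]; [:: (true, 2); (false, 1); (true, 3); (false, 2)]]);
  ([:: 1;4;1;4;1], [:: [:: (false, 1); (true, 3)]; [:: (true, 1); (false, 1)]; [:: (true, 4); (false, 1)]]);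
  ([:: 1;4;1;4;2], [:: [:: (false, 1); (true, 1)]; [:: (true, 1)]; [:: (true, 2); (false, 1); (true, 4); (false, 2)]]);
  ([:: 1;4;1;5;1], [:: [:: (false, 1); (true, 3)]; [:: (true, 1); (false, 1)]; [:: (true, 5); (false, 1)]]);
  ([:: 1;4;1;5;2], [:: [:: (false, 1); (true, 1)]; [:: (true, 1)]; [:: (true, 2); (false, 1); (true, 5); (false, 2)]]);
  ([:: 1;4;2;1;1], [:: [:: (false, 1)]; [:: (true, 2)]; [:: (true, 2); (false, 2); (true, 1); (false, 1)]]);
  ([:: 1;4;2;1;2], [:: [:: (false, 1); (true, 2)]; [:: (true, 2); (false, 2); (true, 1); (false, 2)]]);
  ([:: 1;4;2;2;1], [:: [:: (false, 1); (true, 3)]; [:: (true, 1); (false, 1)]; [:: (false, 1); (true, 2); (false, 1)]]);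
  ([:: 1;4;2;2;2], [:: [:: (false, 1); (true, 2)]; [:: (true, 1)]; [:: (true, 1); (false, 2); (true, 2); (false, 2)]]);
  ([:: 1;4;2;3;1], [:: [:: (false, 1); (true, 3)]; [:: (true, 1); (false, 1)]; [:: (false, 1); (true, 3); (false, 1)]]);
  ([:: 1;4;2;3;2], [:: [:: (false, 1); (true, 2)]; [:: (true, 1)]; [:: (true, 1); (false, 2); (true, 3); (false, 2)]]);
  ([:: 1;4;2;4;1], [:: [:: (false, 1); (true, 3)]; [:: (true, 1); (false, 1)]; [:: (false, 1); (true, 4); (false, 1)]]);
  ([:: 1;4;2;4;2], [:: [:: (false, 1); (true, 2)]; [:: (true, 1)]; [:: (true, 1); (false, 2); (true, 4); (false, 2)]]);
  ([:: 1;4;2;5;1], [:: [:: (false, 1); (true, 3)]; [:: (true, 1); (false, 1)]; [:: (false, 1); (true, 5); (false, 1)]]);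
  ([:: 1;4;2;5;2], [:: [:: (false, 1); (true, 2)]; [:: (true, 1)]; [:: (true, 1); (false, 2); (true, 5); (false, 2)]]);
  ([:: 1;4;3;1;1], [:: [:: (false, 1); (true, 2)]; [:: (true, 2); (false, 3); (true, 1); (false, 1)]]);
  ([:: 1;4;3;1;2], [:: [:: (false, 1)]; [:: (true, 2)]; [:: (true, 2); (false, 3); (true, 1); (false, 2)]]);
  ([:: 1;4;3;2;1], [:: [:: (false, 1)]; [:: (true, 4); (false, 1)]; [:: (false, 2); (true, 2); (false, 1)]]);
  ([:: 1;4;3;2;2], [:: [:: (false, 1); (true, 2)]; [:: (true, 1)]; [:: (true, 1); (false, 3); (true, 2); (false, 2)]]);
  ([:: 1;4;3;3;1], [:: [:: (false, 1)]; [:: (true, 4); (false, 1)]; [:: (false, 2); (true, 3); (false, 1)]]);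
  ([:: 1;4;3;3;2], [:: [:: (false, 1); (true, 2)]; [:: (true, 1)]; [:: (true, 1); (false, 3); (true, 3); (false, 2)]]);
  ([:: 1;4;3;4;1], [:: [:: (false, 1); (true, 1)]; [:: (true, 3); (false, 1)]; [:: (false, 2); (true, 4); (false, 1)]]);
  ([:: 1;4;3;4;2], [:: [:: (false, 1); (true, 2)]; [:: (true, 1)]; [:: (true, 1); (false, 3); (true, 4); (false, 2)]]);
  ([:: 1;4;3;5;1], [:: [:: (false, 1)]; [:: (true, 4); (false, 1)]; [:: (false, 2); (true, 5); (false, 1)]]);
  ([:: 1;4;3;5;2], [:: [:: (false, 1); (true, 2)]; [:: (true, 1)]; [:: (true, 1); (false, 3); (true, 5); (false, 2)]]);
  ([:: 1;5;1;1;1], [:: [:: (false, 1); (true, 2)]; [:: (true, 3); (false, 1); (true, 1); (false, 1)]]);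
  ([:: 1;5;1;1;2], [:: [:: (false, 1); (true, 2)]; [:: (true, 3); (false, 1); (true, 1); (false, 2)]]);
  ([:: 1;5;1;2;1], [:: [:: (false, 1); (true, 4)]; [:: (true, 1); (false, 1)]; [:: (true, 2); (false, 1)]]);
  ([:: 1;5;1;2;2], [:: [:: (false, 1); (true, 1)]; [:: (true, 1)]; [:: (true, 3); (false, 1); (true, 2); (false, 2)]]);
  ([:: 1;5;1;3;1], [:: [:: (false, 1); (true, 3)]; [:: (true, 2); (false, 1)]; [:: (true, 3); (false, 1)]]);
  ([:: 1;5;1;3;2], [:: [:: (false, 1); (true, 1)]; [:: (true, 1)]; [:: (true, 3); (false, 1); (true, 3); (false, 2)]]);
  ([:: 1;5;1;4;1], [:: [:: (false, 1); (true, 3)]; [:: (true, 2); (false, 1)]; [:: (true, 4); (false, 1)]]);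
  ([:: 1;5;1;4;2], [:: [:: (false, 1); (true, 1)]; [:: (true, 1)]; [:: (true, 3); (false, 1); (true, 4); (false, 2)]]);
  ([:: 1;5;1;5;1], [:: [:: (false, 1); (true, 3)]; [:: (true, 2); (false, 1)]; [:: (true, 5); (false, 1)]]);
  ([:: 1;5;1;5;2], [:: [:: (false, 1); (true, 1)]; [:: (true, 1)]; [:: (true, 3); (false, 1); (true, 5); (false, 2)]]);
  ([:: 1;5;2;1;1], [:: [:: (false, 1)]; [:: (true, 2)]; [:: (true, 3); (false, 2); (true, 1); (false, 1)]]);
  ([:: 1;5;2;1;2], [:: [:: (false, 1); (true, 2)]; [:: (true, 3); (false, 2); (true, 1); (false, 2)]]);
  ([:: 1;5;2;2;1], [:: [:: (false, 1); (true, 4)]; [:: (true, 1); (false, 1)]; [:: (false, 1); (true, 2); (false, 1)]]);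
  ([:: 1;5;2;2;2], [:: [:: (false, 1); (true, 2)]; [:: (true, 1)]; [:: (true, 2); (false, 2); (true, 2); (false, 2)]]);
  ([:: 1;5;2;3;1], [:: [:: (false, 1); (true, 3)]; [:: (true, 2); (false, 1)]; [:: (false, 1); (true, 3); (false, 1)]]);
  ([:: 1;5;2;3;2], [:: [:: (false, 1); (true, 2)]; [:: (true, 1)]; [:: (true, 2); (false, 2); (true, 3); (false, 2)]]);
  ([:: 1;5;2;4;1], [:: [:: (false, 1); (true, 3)]; [:: (true, 2); (false, 1)]; [:: (false, 1); (true, 4); (false, 1)]]);
  ([:: 1;5;2;4;2], [:: [:: (false, 1); (true, 2)]; [:: (true, 1)]; [:: (true, 2); (false, 2); (true, 4); (false, 2)]]);
  ([:: 1;5;2;5;1], [:: [:: (false, 1); (true, 3)]; [:: (true, 2); (false, 1)]; [:: (false, 1); (true, 5); (false, 1)]]);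
  ([:: 1;5;2;5;2], [:: [:: (false, 1); (true, 2)]; [:: (true, 1)]; [:: (true, 2); (false, 2); (true, 5); (false, 2)]]);
  ([:: 1;5;3;1;1], [:: [:: (false, 1); (true, 2)]; [:: (true, 3); (false, 3); (true, 1); (false, 1)]]);
  ([:: 1;5;3;1;2], [:: [:: (false, 1)]; [:: (true, 2)]; [:: (true, 3); (false, 3); (true, 1); (false, 2)]]);
  ([:: 1;5;3;2;1], [:: [:: (false, 1)]; [:: (true, 5); (false, 1)]; [:: (false, 2); (true, 2); (false, 1)]]);
  ([:: 1;5;3;2;2], [:: [:: (false, 1); (true, 2)]; [:: (true, 1)]; [:: (true, 2); (false, 3); (true, 2); (false, 2)]]);
  ([:: 1;5;3;3;1], [:: [:: (false, 1)]; [:: (true, 5); (false, 1)]; [:: (false, 2); (true, 3); (false, 1)]]);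
  ([:: 1;5;3;3;2], [:: [:: (false, 1); (true, 2)]; [:: (true, 1)]; [:: (true, 2); (false, 3); (true, 3); (false, 2)]]);
  ([:: 1;5;3;4;1], [:: [:: (false, 1)]; [:: (true, 5); (false, 1)]; [:: (false, 2); (true, 4); (false, 1)]]);
  ([:: 1;5;3;4;2], [:: [:: (false, 1); (true, 2)]; [:: (true, 1)]; [:: (true, 2); (false, 3); (true, 4); (false, 2)]]);
  ([:: 1;5;3;5;1], [:: [:: (false, 1); (true, 1)]; [:: (true, 4); (false, 1)]; [:: (false, 2); (true, 5); (false, 1)]]);
  ([:: 1;5;3;5;2], [:: [:: (false, 1); (true, 2)]; [:: (true, 1)]; [:: (true, 2); (false, 3); (true, 5); (false, 2)]]);
  ([:: 2;1;1;2;2], [:: [:: (false, 2); (true, 1); (false, 1); (true, 2); (false, 2)]]);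
  ([:: 2;1;1;3;2], [:: [:: (false, 2); (true, 1); (false, 1); (true, 3); (false, 2)]]);
  ([:: 2;1;1;4;1], [:: [:: (false, 2); (true, 1); (false, 1); (true, 2)]; [:: (true, 2); (false, 1)]]);
  ([:: 2;1;1;4;2], [:: [:: (false, 2); (true, 1); (false, 1); (true, 4); (false, 2)]]);
  ([:: 2;1;1;5;1], [:: [:: (false, 2); (true, 1); (false, 1); (true, 2)]; [:: (true, 3); (false, 1)]]);
  ([:: 2;1;1;5;2], [:: [:: (false, 2); (true, 1); (false, 1); (true, 5); (false, 2)]]);
  ([:: 2;1;2;2;1], [:: [:: (false, 2)]; [:: (true, 1)]; [:: (false, 2); (true, 2); (false, 1)]]);
  ([:: 2;1;2;2;2], [:: [:: (false, 1)]; [:: (false, 1); (true, 1); (false, 1)]; [:: (false, 1); (true, 2)]; [:: (false, 2)]]);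
  ([:: 2;1;2;3;1], [:: [:: (false, 2)]; [:: (true, 1)]; [:: (false, 2); (true, 3); (false, 1)]]);
  ([:: 2;1;2;3;2], [:: [:: (false, 1)]; [:: (false, 1); (true, 1); (false, 1)]; [:: (false, 1); (true, 2)]; [:: (true, 1); (false, 2)]]);
  ([:: 2;1;2;4;1], [:: [:: (false, 2); (true, 1); (false, 2); (true, 2)]; [:: (true, 2); (false, 1)]]);
  ([:: 2;1;2;4;2], [:: [:: (false, 2); (true, 1); (false, 2); (true, 2)]; [:: (true, 2); (false, 2)]]);
  ([:: 2;1;2;5;1], [:: [:: (false, 2); (true, 1); (false, 2); (true, 2)]; [:: (true, 3); (false, 1)]]);
  ([:: 2;1;2;5;2], [:: [:: (false, 2); (true, 1); (false, 2); (true, 2)]; [:: (true, 3); (false, 2)]]);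
  ([:: 2;1;3;2;1], [:: [:: (false, 2)]; [:: (true, 1)]; [:: (false, 3); (true, 2); (false, 1)]]);
  ([:: 2;1;3;2;2], [:: [:: (false, 1)]; [:: (false, 1); (true, 1); (false, 1)]; [:: (false, 2); (true, 2)]; [:: (false, 2)]]);
  ([:: 2;1;3;3;1], [:: [:: (false, 2)]; [:: (true, 1)]; [:: (false, 3); (true, 3); (false, 1)]]);
  ([:: 2;1;3;3;2], [:: [:: (false, 1)]; [:: (false, 1); (true, 1); (false, 1)]; [:: (false, 2); (true, 2)]; [:: (true, 1); (false, 2)]]);
  ([:: 2;1;3;4;1], [:: [:: (false, 2)]; [:: (true, 1)]; [:: (false, 3); (true, 4); (false, 1)]]);
  ([:: 2;1;3;4;2], [:: [:: (false, 2); (true, 1); (false, 3); (true, 2)]; [:: (true, 2); (false, 2)]]);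
  ([:: 2;1;3;5;1], [:: [:: (false, 2)]; [:: (true, 1)]; [:: (false, 3); (true, 5); (false, 1)]]);
  ([:: 2;1;3;5;2], [:: [:: (false, 2); (true, 1); (false, 3); (true, 2)]; [:: (true, 3); (false, 2)]]);
  ([:: 2;2;1;1;2], [:: [:: (false, 2); (true, 2); (false, 1); (true, 1); (false, 2)]]);
  ([:: 2;2;1;2;2], [:: [:: (false, 2)]; [:: (true, 2); (false, 1); (true, 1)]; [:: (true, 1); (false, 2)]]);
  ([:: 2;2;1;3;1], [:: [:: (false, 2); (true, 2); (false, 1)]; [:: (true, 1)]; [:: (true, 2); (false, 1)]]);
  ([:: 2;2;1;3;2], [:: [:: (false, 2); (true, 2); (false, 1); (true, 3); (false, 2)]]);
  ([:: 2;2;1;4;1], [:: [:: (false, 2); (true, 2); (false, 1)]; [:: (true, 1)]; [:: (true, 3); (false, 1)]]);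
  ([:: 2;2;1;4;2], [:: [:: (false, 2); (true, 2); (false, 1); (true, 4); (false, 2)]]);
  ([:: 2;2;1;5;1], [:: [:: (false, 2); (true, 2); (false, 1)]; [:: (true, 1)]; [:: (true, 4); (false, 1)]]);
  ([:: 2;2;1;5;2], [:: [:: (false, 2); (true, 2); (false, 1); (true, 5); (false, 2)]]);
  ([:: 2;2;2;1;1], [:: [:: (false, 2)]; [:: (true, 2)]; [:: (false, 2); (true, 1); (false, 1)]]);
  ([:: 2;2;2;1;2], [:: [:: (false, 1)]; [:: (false, 1); (true, 2); (false, 1)]; [:: (false, 1); (true, 1)]; [:: (false, 2)]]);
  ([:: 2;2;2;2;1], [:: [:: (false, 2)]; [:: (true, 1)]; [:: (true, 1); (false, 2); (true, 2); (false, 1)]]);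
  ([:: 2;2;2;2;2], [:: [:: (false, 1)]; [:: (false, 1); (true, 2); (false, 1)]; [:: (false, 1); (true, 1)]; [:: (true, 1); (false, 2)]]);
  ([:: 2;2;2;3;1], [:: [:: (false, 2)]; [:: (true, 1)]; [:: (true, 1); (false, 2); (true, 3); (false, 1)]]);
  ([:: 2;2;2;3;2], [:: [:: (false, 2); (true, 2)]; [:: (false, 2); (true, 1)]; [:: (true, 2); (false, 2)]]);
  ([:: 2;2;2;4;1], [:: [:: (false, 2)]; [:: (true, 1)]; [:: (true, 1); (false, 2); (true, 4); (false, 1)]]);
  ([:: 2;2;2;4;2], [:: [:: (false, 2); (true, 2)]; [:: (false, 2); (true, 1)]; [:: (true, 3); (false, 2)]]);
  ([:: 2;2;2;5;1], [:: [:: (false, 2)]; [:: (true, 1)]; [:: (true, 1); (false, 2); (true, 5); (false, 1)]]);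
  ([:: 2;2;2;5;2], [:: [:: (false, 2); (true, 2)]; [:: (false, 2); (true, 1)]; [:: (true, 4); (false, 2)]]);
  ([:: 2;2;3;1;1], [:: [:: (false, 2)]; [:: (true, 2)]; [:: (false, 3); (true, 1); (false, 1)]]);
  ([:: 2;2;3;1;2], [:: [:: (false, 1)]; [:: (false, 1); (true, 2); (false, 1)]; [:: (false, 2); (true, 1)]; [:: (false, 2)]]);
  ([:: 2;2;3;2;1], [:: [:: (false, 2)]; [:: (true, 1)]; [:: (true, 1); (false, 3); (true, 2); (false, 1)]]);
  ([:: 2;2;3;2;2], [:: [:: (false, 1)]; [:: (false, 1); (true, 2); (false, 1)]; [:: (false, 2); (true, 1)]; [:: (true, 1); (false, 2)]]);
  ([:: 2;2;3;3;1], [:: [:: (false, 2)]; [:: (true, 1)]; [:: (true, 1); (false, 3); (true, 3); (false, 1)]]);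
  ([:: 2;2;3;3;2], [:: [:: (false, 2); (true, 2)]; [:: (false, 3); (true, 1)]; [:: (true, 2); (false, 2)]]);
  ([:: 2;2;3;4;1], [:: [:: (false, 2)]; [:: (true, 1)]; [:: (true, 1); (false, 3); (true, 4); (false, 1)]]);
  ([:: 2;2;3;4;2], [:: [:: (false, 2); (true, 2)]; [:: (false, 3); (true, 1)]; [:: (true, 3); (false, 2)]]);
  ([:: 2;2;3;5;1], [:: [:: (false, 2)]; [:: (true, 1)]; [:: (true, 1); (false, 3); (true, 5); (false, 1)]]);
  ([:: 2;2;3;5;2], [:: [:: (false, 2); (true, 2)]; [:: (false, 3); (true, 1)]; [:: (true, 4); (false, 2)]]);
  ([:: 2;3;1;1;2], [:: [:: (false, 2); (true, 3); (false, 1); (true, 1); (false, 2)]]);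
  ([:: 2;3;1;2;1], [:: [:: (false, 2); (true, 2)]; [:: (true, 1)]; [:: (false, 1); (true, 2); (false, 1)]]);
  ([:: 2;3;1;2;2], [:: [:: (false, 2); (true, 3); (false, 1); (true, 2); (false, 2)]]);
  ([:: 2;3;1;3;1], [:: [:: (false, 2); (true, 2)]; [:: (true, 1)]; [:: (false, 1); (true, 3); (false, 1)]]);
  ([:: 2;3;1;3;2], [:: [:: (false, 2); (true, 2)]; [:: (true, 1); (false, 1)]; [:: (true, 3); (false, 2)]]);
  ([:: 2;3;1;4;1], [:: [:: (false, 2); (true, 2)]; [:: (true, 1)]; [:: (false, 1); (true, 4); (false, 1)]]);
  ([:: 2;3;1;4;2], [:: [:: (false, 2); (true, 3); (false, 1); (true, 4); (false, 2)]]);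
  ([:: 2;3;1;5;1], [:: [:: (false, 2); (true, 2)]; [:: (true, 1)]; [:: (false, 1); (true, 5); (false, 1)]]);
  ([:: 2;3;1;5;2], [:: [:: (false, 2); (true, 3); (false, 1); (true, 5); (false, 2)]]);
  ([:: 2;3;2;1;1], [:: [:: (false, 2)]; [:: (true, 2)]; [:: (true, 1); (false, 2); (true, 1); (false, 1)]]);
  ([:: 2;3;2;1;2], [:: [:: (false, 1)]; [:: (false, 1); (true, 1)]; [:: (true, 2)]; [:: (false, 2); (true, 1); (false, 2)]]);
  ([:: 2;3;2;2;1], [:: [:: (false, 2)]; [:: (true, 1)]; [:: (true, 2); (false, 2); (true, 2); (false, 1)]]);
  ([:: 2;3;2;2;2], [:: [:: (false, 2); (true, 2)]; [:: (true, 1); (false, 1)]; [:: (false, 1); (true, 2); (false, 2)]]);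
  ([:: 2;3;2;3;1], [:: [:: (false, 2)]; [:: (true, 1)]; [:: (true, 2); (false, 2); (true, 3); (false, 1)]]);
  ([:: 2;3;2;3;2], [:: [:: (false, 2); (true, 2)]; [:: (true, 1); (false, 1)]; [:: (false, 1); (true, 3); (false, 2)]]);
  ([:: 2;3;2;4;1], [:: [:: (false, 2)]; [:: (true, 1)]; [:: (true, 2); (false, 2); (true, 4); (false, 1)]]);
  ([:: 2;3;2;4;2], [:: [:: (false, 2); (true, 2)]; [:: (true, 1); (false, 1)]; [:: (false, 1); (true, 4); (false, 2)]]);
  ([:: 2;3;2;5;1], [:: [:: (false, 2)]; [:: (true, 1)]; [:: (true, 2); (false, 2); (true, 5); (false, 1)]]);
  ([:: 2;3;2;5;2], [:: [:: (false, 2); (true, 2)]; [:: (true, 1); (false, 1)]; [:: (false, 1); (true, 5); (false, 2)]]);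
  ([:: 2;3;3;1;1], [:: [:: (false, 2)]; [:: (true, 2)]; [:: (true, 1); (false, 3); (true, 1); (false, 1)]]);
  ([:: 2;3;3;1;2], [:: [:: (false, 1)]; [:: (false, 1); (true, 1)]; [:: (true, 2)]; [:: (false, 3); (true, 1); (false, 2)]]);
  ([:: 2;3;3;2;1], [:: [:: (false, 2)]; [:: (true, 1)]; [:: (true, 2); (false, 3); (true, 2); (false, 1)]]);
  ([:: 2;3;3;2;2], [:: [:: (false, 2); (true, 2)]; [:: (true, 1); (false, 1)]; [:: (false, 2); (true, 2); (false, 2)]]);
  ([:: 2;3;3;3;1], [:: [:: (false, 2)]; [:: (true, 1)]; [:: (true, 2); (false, 3); (true, 3); (false, 1)]]);
  ([:: 2;3;3;3;2], [:: [:: (false, 2); (true, 2)]; [:: (true, 1); (false, 1)]; [:: (false, 2); (true, 3); (false, 2)]]);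
  ([:: 2;3;3;4;1], [:: [:: (false, 2)]; [:: (true, 1)]; [:: (true, 2); (false, 3); (true, 4); (false, 1)]]);
  ([:: 2;3;3;4;2], [:: [:: (false, 2); (true, 2)]; [:: (true, 1); (false, 1)]; [:: (false, 2); (true, 4); (false, 2)]]);
  ([:: 2;3;3;5;1], [:: [:: (false, 2)]; [:: (true, 1)]; [:: (true, 2); (false, 3); (true, 5); (false, 1)]]);
  ([:: 2;3;3;5;2], [:: [:: (false, 2); (true, 2)]; [:: (true, 1); (false, 1)]; [:: (false, 2); (true, 5); (false, 2)]]);
  ([:: 2;4;1;1;1], [:: [:: (false, 2); (true, 2)]; [:: (true, 2); (false, 1); (true, 1); (false, 1)]]);
  ([:: 2;4;1;1;2], [:: [:: (false, 2); (true, 4); (false, 1); (true, 1); (false, 2)]]);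
  ([:: 2;4;1;2;1], [:: [:: (false, 2); (true, 2)]; [:: (true, 1)]; [:: (true, 1); (false, 1); (true, 2); (false, 1)]]);
  ([:: 2;4;1;2;2], [:: [:: (false, 2); (true, 4); (false, 1); (true, 2); (false, 2)]]);
  ([:: 2;4;1;3;1], [:: [:: (false, 2); (true, 2)]; [:: (true, 1)]; [:: (true, 1); (false, 1); (true, 3); (false, 1)]]);
  ([:: 2;4;1;3;2], [:: [:: (false, 2); (true, 4); (false, 1); (true, 3); (false, 2)]]);
  ([:: 2;4;1;4;1], [:: [:: (false, 2); (true, 2)]; [:: (true, 1)]; [:: (true, 1); (false, 1); (true, 4); (false, 1)]]);
  ([:: 2;4;1;4;2], [:: [:: (false, 2); (true, 3)]; [:: (true, 1); (false, 1)]; [:: (true, 4); (false, 2)]]);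
  ([:: 2;4;1;5;1], [:: [:: (false, 2); (true, 2)]; [:: (true, 1)]; [:: (true, 1); (false, 1); (true, 5); (false, 1)]]);
  ([:: 2;4;1;5;2], [:: [:: (false, 2); (true, 4); (false, 1); (true, 5); (false, 2)]]);
  ([:: 2;4;2;1;1], [:: [:: (false, 2); (true, 2)]; [:: (true, 2); (false, 2); (true, 1); (false, 1)]]);
  ([:: 2;4;2;1;2], [:: [:: (false, 2); (true, 2)]; [:: (true, 2); (false, 2); (true, 1); (false, 2)]]);
  ([:: 2;4;2;2;1], [:: [:: (false, 2)]; [:: (true, 1)]; [:: (true, 3); (false, 2); (true, 2); (false, 1)]]);
  ([:: 2;4;2;2;2], [:: [:: (false, 2); (true, 3)]; [:: (true, 1); (false, 1)]; [:: (false, 1); (true, 2); (false, 2)]]);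
  ([:: 2;4;2;3;1], [:: [:: (false, 2)]; [:: (true, 1)]; [:: (true, 3); (false, 2); (true, 3); (false, 1)]]);
  ([:: 2;4;2;3;2], [:: [:: (false, 2); (true, 3)]; [:: (true, 1); (false, 1)]; [:: (false, 1); (true, 3); (false, 2)]]);
  ([:: 2;4;2;4;1], [:: [:: (false, 2)]; [:: (true, 1)]; [:: (true, 3); (false, 2); (true, 4); (false, 1)]]);
  ([:: 2;4;2;4;2], [:: [:: (false, 2); (true, 3)]; [:: (true, 1); (false, 1)]; [:: (false, 1); (true, 4); (false, 2)]]);
  ([:: 2;4;2;5;1], [:: [:: (false, 2)]; [:: (true, 1)]; [:: (true, 3); (false, 2); (true, 5); (false, 1)]]);
  ([:: 2;4;2;5;2], [:: [:: (false, 2); (true, 3)]; [:: (true, 1); (false, 1)]; [:: (false, 1); (true, 5); (false, 2)]]);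
  ([:: 2;4;3;1;1], [:: [:: (false, 1)]; [:: (false, 1); (true, 2)]; [:: (true, 2); (false, 3); (true, 1); (false, 1)]]);
  ([:: 2;4;3;1;2], [:: [:: (false, 2); (true, 2)]; [:: (true, 2); (false, 3); (true, 1); (false, 2)]]);
  ([:: 2;4;3;2;1], [:: [:: (false, 2)]; [:: (true, 1)]; [:: (true, 3); (false, 3); (true, 2); (false, 1)]]);
  ([:: 2;4;3;2;2], [:: [:: (false, 2); (true, 3)]; [:: (true, 1); (false, 1)]; [:: (false, 2); (true, 2); (false, 2)]]);
  ([:: 2;4;3;3;1], [:: [:: (false, 2)]; [:: (true, 1)]; [:: (true, 3); (false, 3); (true, 3); (false, 1)]]);
  ([:: 2;4;3;3;2], [:: [:: (false, 2); (true, 3)]; [:: (true, 1); (false, 1)]; [:: (false, 2); (true, 3); (false, 2)]]);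
  ([:: 2;4;3;4;1], [:: [:: (false, 2)]; [:: (true, 1)]; [:: (true, 3); (false, 3); (true, 4); (false, 1)]]);
  ([:: 2;4;3;4;2], [:: [:: (false, 2); (true, 3)]; [:: (true, 1); (false, 1)]; [:: (false, 2); (true, 4); (false, 2)]]);
  ([:: 2;4;3;5;1], [:: [:: (false, 2)]; [:: (true, 1)]; [:: (true, 3); (false, 3); (true, 5); (false, 1)]]);
  ([:: 2;4;3;5;2], [:: [:: (false, 2); (true, 3)]; [:: (true, 1); (false, 1)]; [:: (false, 2); (true, 5); (false, 2)]]);
  ([:: 2;5;1;1;1], [:: [:: (false, 2); (true, 2)]; [:: (true, 3); (false, 1); (true, 1); (false, 1)]]);
  ([:: 2;5;1;1;2], [:: [:: (false, 2); (true, 5); (false, 1); (true, 1); (false, 2)]]);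
  ([:: 2;5;1;2;1], [:: [:: (false, 2); (true, 2)]; [:: (true, 1)]; [:: (true, 2); (false, 1); (true, 2); (false, 1)]]);
  ([:: 2;5;1;2;2], [:: [:: (false, 2); (true, 5); (false, 1); (true, 2); (false, 2)]]);
  ([:: 2;5;1;3;1], [:: [:: (false, 2); (true, 2)]; [:: (true, 1)]; [:: (true, 2); (false, 1); (true, 3); (false, 1)]]);
  ([:: 2;5;1;3;2], [:: [:: (false, 2); (true, 5); (false, 1); (true, 3); (false, 2)]]);
  ([:: 2;5;1;4;1], [:: [:: (false, 2); (true, 2)]; [:: (true, 1)]; [:: (true, 2); (false, 1); (true, 4); (false, 1)]]);
  ([:: 2;5;1;4;2], [:: [:: (false, 2); (true, 5); (false, 1); (true, 4); (false, 2)]]);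
  ([:: 2;5;1;5;1], [:: [:: (false, 2); (true, 2)]; [:: (true, 1)]; [:: (true, 2); (false, 1); (true, 5); (false, 1)]]);
  ([:: 2;5;1;5;2], [:: [:: (false, 2); (true, 3)]; [:: (true, 2); (false, 1)]; [:: (true, 5); (false, 2)]]);
  ([:: 2;5;2;1;1], [:: [:: (false, 2); (true, 2)]; [:: (true, 3); (false, 2); (true, 1); (false, 1)]]);
  ([:: 2;5;2;1;2], [:: [:: (false, 2); (true, 2)]; [:: (true, 3); (false, 2); (true, 1); (false, 2)]]);
  ([:: 2;5;2;2;1], [:: [:: (false, 2)]; [:: (true, 1)]; [:: (true, 4); (false, 2); (true, 2); (false, 1)]]);
  ([:: 2;5;2;2;2], [:: [:: (false, 2); (true, 4)]; [:: (true, 1); (false, 1)]; [:: (false, 1); (true, 2); (false, 2)]]);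
  ([:: 2;5;2;3;1], [:: [:: (false, 2)]; [:: (true, 1)]; [:: (true, 4); (false, 2); (true, 3); (false, 1)]]);
  ([:: 2;5;2;3;2], [:: [:: (false, 2); (true, 3)]; [:: (true, 2); (false, 1)]; [:: (false, 1); (true, 3); (false, 2)]]);
  ([:: 2;5;2;4;1], [:: [:: (false, 2)]; [:: (true, 1)]; [:: (true, 4); (false, 2); (true, 4); (false, 1)]]);
  ([:: 2;5;2;4;2], [:: [:: (false, 2); (true, 3)]; [:: (true, 2); (false, 1)]; [:: (false, 1); (true, 4); (false, 2)]]);
  ([:: 2;5;2;5;1], [:: [:: (false, 2)]; [:: (true, 1)]; [:: (true, 4); (false, 2); (true, 5); (false, 1)]]);
  ([:: 2;5;2;5;2], [:: [:: (false, 2); (true, 3)]; [:: (true, 2); (false, 1)]; [:: (false, 1); (true, 5); (false, 2)]]);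
  ([:: 2;5;3;1;1], [:: [:: (false, 1)]; [:: (false, 1); (true, 2)]; [:: (true, 3); (false, 3); (true, 1); (false, 1)]]);
  ([:: 2;5;3;1;2], [:: [:: (false, 2); (true, 2)]; [:: (true, 3); (false, 3); (true, 1); (false, 2)]]);
  ([:: 2;5;3;2;1], [:: [:: (false, 2)]; [:: (true, 1)]; [:: (true, 4); (false, 3); (true, 2); (false, 1)]]);
  ([:: 2;5;3;2;2], [:: [:: (false, 2); (true, 4)]; [:: (true, 1); (false, 1)]; [:: (false, 2); (true, 2); (false, 2)]]);
  ([:: 2;5;3;3;1], [:: [:: (false, 2)]; [:: (true, 1)]; [:: (true, 4); (false, 3); (true, 3); (false, 1)]]);
  ([:: 2;5;3;3;2], [:: [:: (false, 2); (true, 3)]; [:: (true, 2); (false, 1)]; [:: (false, 2); (true, 3); (false, 2)]]);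
  ([:: 2;5;3;4;1], [:: [:: (false, 2)]; [:: (true, 1)]; [:: (true, 4); (false, 3); (true, 4); (false, 1)]]);
  ([:: 2;5;3;4;2], [:: [:: (false, 2); (true, 3)]; [:: (true, 2); (false, 1)]; [:: (false, 2); (true, 4); (false, 2)]]);
  ([:: 2;5;3;5;1], [:: [:: (false, 2)]; [:: (true, 1)]; [:: (true, 4); (false, 3); (true, 5); (false, 1)]]);
  ([:: 2;5;3;5;2], [:: [:: (false, 2); (true, 3)]; [:: (true, 2); (false, 1)]; [:: (false, 2); (true, 5); (false, 2)]])].

Definition expand (b : seq (bool * nat)) : word := flatten [seq nseq x.2 x.1 | x <- b].

Definition check_entry (e : seq nat * seq (seq (bool * nat))) : bool :=
  let Bs := map expand e.2 in
  match e.1 with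
  | [:: n1; n2; n3; n4; n5] =>
      [&& flatten Bs == W n1 n2 n3 n4 n5, all (fun B => B != [::]) Bs, 0 < size Bs &
          cnt (flatten (rev Bs)) != size (flatten (rev Bs))]
  | _ => false
  end.

Lemma table_ok : all check_entry table.
Proof. vm_compute. reflexivity. Qed.

Definition nongoodb n1 n2 n3 n4 n5 :=
  [&& 8 <= n1 + n2 + n3 + n4 + n5, ~~ ((n2 == 1) && (n4 == 1)) &
      ~~ ((n1 + n2 + n3 + n4 + n5 == 8) && (n2 + n4 == 4))].

Lemma box_cover :
  all (fun n1 => all (fun n2 => all (fun n3 => all (fun n4 => all (fun n5 =>
    nongoodb n1 n2 n3 n4 n5 ==> ([:: n1; n2; n3; n4; n5] \in map fst table))
    (iota 1 2)) (iota 1 5)) (iota 1 3)) (iota 1 5)) (iota 1 2).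
Proof. vm_compute. reflexivity. Qed.

Lemma box_ok n1 n2 n3 n4 n5 : 1 <= n1 <= 2 -> 1 <= n2 <= 5 -> 1 <= n3 <= 3 ->
  1 <= n4 <= 5 -> 1 <= n5 <= 2 -> nongoodb n1 n2 n3 n4 n5 ->
  nonrichBR (W n1 n2 n3 n4 n5).
Proof.
move=> H1 H2 H3 H4 H5 Hng.
have Hin : [:: n1; n2; n3; n4; n5] \in map fst table.
  move/allP: box_cover => /(_ n1); rewrite mem_iota => /(_ ltac:(lia)).
  move/allP => /(_ n2); rewrite mem_iota => /(_ ltac:(lia)).
  move/allP => /(_ n3); rewrite mem_iota => /(_ ltac:(lia)).
  move/allP => /(_ n4); rewrite mem_iota => /(_ ltac:(lia)).
  move/allP => /(_ n5); rewrite mem_iota => /(_ ltac:(lia)).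
  by rewrite Hng.
case/mapP: Hin => e He Ee.
move/allP: table_ok => /(_ e He); rewrite /check_entry -Ee.
case/and4P => /eqP Hf Hne Hsz Hc.
exists (flatten (rev (map expand e.2))); split; first by exists (map expand e.2).
by rewrite rich_cnt; apply/eqP.
Qed.

Lemma nonrich_all n1 n2 n3 n4 n5 : 1 <= n1 -> 1 <= n2 -> 1 <= n3 -> 1 <= n4 -> 1 <= n5 ->
  nongoodb n1 n2 n3 n4 n5 -> nonrichBR (W n1 n2 n3 n4 n5).
Proof.
move=> H1 H2 H3 H4 H5 Hng.
have Hnb : ~~ ((n2 == 1) && (n4 == 1)) by case/and3P: Hng.
case: (leqP 3 n1) => A1; first exact: st1.
case: (leqP 3 n5) => A5.
  by apply: mirror; apply: st1 => //; rewrite andbC.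
case: (leqP 6 n4) => A4; first exact: st3.
case: (leqP 6 n2) => A2; first by apply: mirror; apply: st3.
case: (leqP 4 n3) => A3; first by apply: st5 => //; lia.
apply: box_ok => //; lia.
Qed.

Definition V2 x y z : word := nseq x false ++ true :: nseq y false ++ true :: nseq z false.

Definition f1 i : word := nseq i.+1 false.
Definition f2 i : word := nseq i false ++ true :: nseq i false.
Definition f3 y i : word := nseq i false ++ true :: nseq y false ++ true :: nseq i false.

Lemma nseq_split m a (c : bool) : a <= m -> nseq m c = nseq (m - a) c ++ nseq a c.
Proof. by move=> H; rewrite -nseqD subnK. Qed.

Lemma nseq_split2 m a (c : bool) : a <= m -> nseq m c = nseq a c ++ nseq (m - a) c.
Proof. by move=> H; rewrite -nseqD subnKC. Qed.

Lemma cnt_f1 i : count_mem true (f1 i) = 0.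
Proof. by rewrite /f1 count_nseq. Qed.
Lemma cnt_f2 i : count_mem true (f2 i) = 1.
Proof. by rewrite /f2 count_cat /= !count_nseq. Qed.
Lemma cnt_f3 y i : count_mem true (f3 y i) = 2.
Proof. by rewrite /f3 count_cat /= count_cat /= !count_nseq. Qed.

Lemma pal_f2 i : palindrome (f2 i).
Proof. by rewrite /palindrome /f2 rev_cat rev_cons rev_nseq cat_rcons. Qed.
Lemma pal_f3 y i : palindrome (f3 y i).
Proof.
by rewrite /palindrome /f3 rev_cat rev_cons rev_cat rev_cons !rev_nseq !cat_rcons -!catA.
Qed.

Lemma rich2 x y z : rich (V2 x y z).
Proof.
set M := maxn x (maxn y z).
set K := maxn (minn x y) (minn y z).
set L := [seq f1 i | i <- iota 0 M] ++ [seq f2 i | i <- iota 0 K.+1] ++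
         [seq f3 y i | i <- iota 0 (minn x z).+1].
have HsL : size L = size (V2 x y z).
  rewrite /L /V2 !size_cat !size_map !size_iota /= ?size_cat ?size_nseq /=.
  rewrite /M /K size_nseq; lia.
have Hu : uniq L.
  have I1 : injective f1 by move=> i j /(congr1 size); rewrite !size_nseq => [[]].
  have I2 : injective f2.
    by move=> i j /(congr1 size); rewrite !size_cat /= !size_nseq; lia.
  have I3 : injective (f3 y).
    by move=> i j /(congr1 size); rewrite /f3 !size_cat /= !size_cat /= !size_nseq; lia.
  rewrite /L !cat_uniq !(map_inj_uniq I1, map_inj_uniq I2, map_inj_uniq I3) !iota_uniq.
  apply/and3P; split => //; last (apply/and3P; split => //).
    apply/hasPn => u; rewrite mem_cat => /orP [] /mapP [i _ ->]; apply/negP => /mapP [j _ E].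
      by have := cnt_f2 i; rewrite E cnt_f1.
    by have := cnt_f3 y i; rewrite E cnt_f1.
  apply/hasPn => u /mapP [i _ ->]; apply/negP => /mapP [j _ E].
  by have := cnt_f3 y i; rewrite E cnt_f2.
suff : size L <= cnt (V2 x y z).
  by rewrite HsL => H; rewrite rich_cnt; apply/eqP; rewrite eqn_leq cnt_size H.
apply: uniq_leq_size => // u; rewrite mem_pal /L !mem_cat.
case/or3P => /mapP [i]; rewrite mem_iota => /andP [_ Hi] ->.
- have P1 : palindrome (f1 i) by rewrite /palindrome /f1 rev_nseq.
  rewrite P1 /f1 -size_eq0 size_nseq /=.
  move: Hi; rewrite /M add0n !leq_max => /orP [Hx|/orP [Hy|Hz]].
  + rewrite /V2 (nseq_split false Hx); apply/infixP.
    by exists (nseq (x - i.+1) false), (true :: nseq y false ++ true :: nseq z false); rewrite -!catA.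
  + rewrite /V2 (nseq_split false Hy); apply/infixP.
    by exists (rcons (nseq x false) true ++ nseq (y - i.+1) false), (true :: nseq z false);
      rewrite -!catA cat_rcons -?catA.
  + rewrite /V2 (nseq_split false Hz); apply/infixP.
    exists (nseq x false ++ true :: nseq y false ++ true :: nseq (z - i.+1) false), [::].
    by rewrite cats0 -!catA /= -?catA /= -?catA.
- rewrite /f2 -size_eq0 size_cat /= addnS /= pal_f2 /=.
  move: Hi; rewrite /K add0n ltnS !leq_max !leq_min => /orP [/andP [Hx Hy]|/andP [Hy Hz]].
  + rewrite /V2 (nseq_split false Hx) (nseq_split2 false Hy); apply/infixP.
    exists (nseq (x - i) false), (nseq (y - i) false ++ true :: nseq z false).
    by rewrite -!catA.
  + rewrite /V2 (nseq_split false Hy) (nseq_split2 false Hz); apply/infixP.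
    exists (nseq x false ++ true :: nseq (y - i) false), (nseq (z - i) false).
    by rewrite -!catA /= -?catA.
- rewrite /f3 -size_eq0 size_cat /= addnS /= pal_f3 /=.
  move: Hi; rewrite add0n ltnS leq_min => /andP [Hx Hz].
  rewrite /V2 (nseq_split false Hx) (nseq_split2 false Hz); apply/infixP.
  exists (nseq (x - i) false), (nseq (z - i) false).
  by rewrite -!catA /= -!catA.
Qed.

Lemma count0 (v : word) : count_mem true v = 0 -> v = nseq (size v) false.
Proof.
elim: v => //= b v IH; case: b => //= H.
by rewrite -IH.
Qed.

Lemma countS (v : word) n : count_mem true v = n.+1 ->
  exists x v', v = nseq x false ++ true :: v' /\ count_mem true v' = n.
Proof.
elim: v => //= b v IH; case: b => /= H.
  by exists 0, v; split => //; move: H; rewrite add1n => -[].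
case: (IH H) => x [v' [-> Hc]]; by exists x.+1, v'.
Qed.

Lemma count2 (v : word) : count_mem true v = 2 -> exists x y z, v = V2 x y z.
Proof.
case/countS => x [v1 [-> H1]]; case/countS: H1 => y [v2 [-> H2]].
by exists x, y, (size v2); rewrite /V2 {1}(count0 H2).
Qed.

Lemma good1_rich n1 n3 n5 v :
  inBR (nseq n1 la ++ [:: lb] ++ nseq n3 la ++ [:: lb] ++ nseq n5 la) v -> rich v.
Proof.
move/inBR_count; rewrite !count_cat /= !count_nseq /= => /count2 [x [y [z ->]]].
exact: rich2.
Qed.

Definition allrich (w : word) := all (fun v => cnt v == size v) (brs_aux (size w) w).

Lemma allrichP w : allrich w -> forall v, inBR w v -> rich v.
Proof.
by move=> /allP H v /inBR_brs Hv; rewrite rich_cnt; apply/eqP; apply: H.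
Qed.

Lemma good2_rich n2 n4 v : 1 <= n2 -> 1 <= n4 -> n2 + n4 = 4 ->
  [\/ inBR ([:: la] ++ nseq n2 lb ++ [:: la] ++ nseq n4 lb ++ [:: la; la]) v,
      inBR ([:: la; la] ++ nseq n2 lb ++ [:: la] ++ nseq n4 lb ++ [:: la]) v
    | inBR ([:: la] ++ nseq n2 lb ++ [:: la; la] ++ nseq n4 lb ++ [:: la]) v] ->
  rich v.
Proof.
move=> H2 H4 H24.
have : (n2 == 1) && (n4 == 3) || (n2 == 2) && (n4 == 2) || (n2 == 3) && (n4 == 1) by lia.
case/orP => [/orP [] | ] /andP [/eqP -> /eqP ->] H;
  (case: H => H; apply: (allrichP _ H); vm_compute; reflexivity).
Qed.

Lemma good_rich w : good_form w -> forall v, inBR w v -> rich v.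
Proof.
case.
  by case=> n1 [n3 [n5 [_ _ _ ->]]] v; apply: good1_rich.
case=> n2 [n4 [H2 H4 H24 Hw]] v Hv; apply: (good2_rich H2 H4 H24).
by case: Hw => E; rewrite E in Hv; [apply: Or31 | apply: Or32 | apply: Or33].
Qed.

Definition rexp (rs : seq (bool * nat)) : word := flatten [seq nseq x.2 x.1 | x <- rs].

Lemma rle_exp w : rexp (rle w) = w.
Proof.
elim: w => //= x s IH.
case E: (rle s) IH => [|[y n] r] IH.
  by rewrite /rexp /= in IH *; rewrite -IH.
case: eqP => [Exy|_]; [subst y|]; rewrite /rexp /= in IH *; by rewrite -IH.
Qed.

Lemma rle_pos w : all (fun x => 0 < x.2) (rle w).
Proof.
elim: w => //= x s IH.
case E: (rle s) IH => [|[y n] r] //= /andP [H1 H2].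
by case: eqP => _ /=; rewrite ?H1 ?H2.
Qed.

Lemma rle_alt w : sorted (fun x y : bool * nat => x.1 != y.1) (rle w).
Proof.
elim: w => //= x s IH.
case E: (rle s) IH => [|[y n] r] //= IH.
case: eqP => [_|/eqP H] /=; first by case: (r) IH.
by rewrite H.
Qed.

Lemma rle5 w : l w = 5 -> exists c n1 n2 n3 n4 n5,
  [/\ 0 < n1, 0 < n2, 0 < n3, 0 < n4 & 0 < n5] /\
  w = nseq n1 c ++ nseq n2 (~~ c) ++ nseq n3 c ++ nseq n4 (~~ c) ++ nseq n5 c.
Proof.
rewrite /l => Hl.
have E := rle_exp w; have P := rle_pos w; have A := rle_alt w.
case: (rle w) Hl E P A => [|[c1 n1] [|[c2 n2] [|[c3 n3] [|[c4 n4] [|[c5 n5] [|]]]]]] //= _ E.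
case/and5P => H1 H2 H3 H4 /andP [H5 _] /and4P [A1 A2 A3 A4].
exists c1, n1, n2, n3, n4, n5; split => //.
rewrite -E /rexp /= cats0.
have e2 : c2 = ~~ c1 by move: A1; case: (c1); case: (c2).
have e3 : c3 = c1 by move: A1 A2; case: (c1); case: (c2); case: (c3).
have e4 : c4 = ~~ c1 by move: A1 A2 A3; case: (c1); case: (c2); case: (c3); case: (c4).
have e5 : c5 = c1 by move: A1 A2 A3 A4; case: (c1); case: (c2); case: (c3); case: (c4); case: (c5).
by rewrite e2 e3 e4 e5.
Qed.

Lemma fwd_a n1 n2 n3 n4 n5 : 1 <= n1 -> 1 <= n2 -> 1 <= n3 -> 1 <= n4 -> 1 <= n5 ->
  7 < n1 + n2 + n3 + n4 + n5 ->
  (forall v, inBR (W n1 n2 n3 n4 n5) v -> rich v) -> good_form (W n1 n2 n3 n4 n5).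
Proof.
move=> H1 H2 H3 H4 H5 HN H.
case: (boolP ((n2 == 1) && (n4 == 1))) => [/andP [/eqP E2 /eqP E4]|Hnb].
  left; exists n1, n3, n5; split => //.
  by rewrite /W E2 E4.
case: (boolP ((n1 + n2 + n3 + n4 + n5 == 8) && (n2 + n4 == 4))) => [/andP [/eqP EN /eqP E24]|Hg].
  right; exists n2, n4; split => //.
  have : [|| (n1 == 1) && (n3 == 1) && (n5 == 2), (n1 == 2) && (n3 == 1) && (n5 == 1)
           | (n1 == 1) && (n3 == 2) && (n5 == 1)] by lia.
  case/or3P => /andP [/andP [/eqP -> /eqP ->] /eqP ->].
  - by apply: Or31.
  - by apply: Or32.
  - by apply: Or33.
exfalso.
have [|v [Hv Hr]] := @nonrich_all n1 n2 n3 n4 n5 H1 H2 H3 H4 H5.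
  by rewrite /nongoodb Hnb Hg andbT; lia.
by apply: Hr; apply: H.
Qed.

Theorem mainTheorem11 (w : seq bool) :
  7 < size w -> l w = 5 ->
  ((forall v, inBR w v -> rich v) <-> (good_form w \/ good_form (compl w))).
Proof.
move=> Hs Hl; split; last first.
  case=> Hg v Hv; first exact: good_rich Hg v Hv.
  by rewrite -rich_compl; apply: good_rich Hg _ _; apply: inBR_compl.
move=> H.
case: (rle5 Hl) => c [n1 [n2 [n3 [n4 [n5 [[H1 H2 H3 H4 H5] Hw]]]]]].
have HN : 7 < n1 + n2 + n3 + n4 + n5.
  by move: Hs; rewrite Hw !size_cat !size_nseq; lia.
case: c Hw => /= Hw.
  right.
  have -> : compl w = W n1 n2 n3 n4 n5 by rewrite Hw /compl /W !map_cat !map_nseq.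
  apply: fwd_a => // v Hv.
  rewrite -rich_compl; apply: H.
  have -> : w = compl (W n1 n2 n3 n4 n5) by rewrite Hw /compl /W !map_cat !map_nseq.
  exact: inBR_compl.
left; rewrite Hw; apply: fwd_a => // v Hv; apply: H; rewrite Hw; exact: Hv.
Qed.
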